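(* Let $F$ be a violating edge set and let $(\mathcal{T},\mathcal{M},y)$ be a tree embedding of $(G,\tilde x)$ that is good for $F$. Let $(A,B)\in Z_F$ and let $S\subseteq V(\mathcal{T})$ be such that all leaves corresponding to $A$ lie in $S$ and all leaves corresponding to $B$ lie in $V(\mathcal{T})\setminus S$. Then $y\big(\delta_{\mathcal{T}\setminus\mathcal{M}^{-1}(F)}(S)\big)\ge\frac{1}{4(p+q)\beta}$.
   Context: Setting: $G=(V,E)$ is an undirected graph with edges partitioned into safe edges $\mathcal{S}$ and unsafe edges; $p,q$ are nonnegative integers with $p+q\ge1$; $(s_i,t_i)$, $i\in[k]$, are terminal pairs; $H\subseteq E$ is such that every pair is $(p,q)$-flex-connected in $H$ (every cut $\delta_H(S)$ separating $s_i$ from $t_i$ has at least $p$ safe edges or at least $p+q$ edges). A set $S\subseteq V$ is violated if it separates some pair, $|\delta_H(S)|=p+q$ and $|\delta_H(S)\cap\mathcal{S}|<p$; a violating edge set is $F=\delta_H(S)$ for a violated $S$. Let $\beta\ge1$. Let $x:E\setminus H\to[0,1]$ satisfy $x(\delta_{E\setminus H}(S))\ge1$ for every violated $S$, and assume $0<x_e<\frac{1}{4(p+q)\beta}$ for every $e\in E\setminus H$. Define capacities $\tilde x_e=\frac{1}{4(p+q)\beta}$ for $e\in H$ and $\tilde x_e=x_e$ for $e\in E\setminus H$. A tree embedding of $(G,\tilde x)$ is a tree $\mathcal{T}$ with $\mathcal{M}_1:V(\mathcal{T})\to V$ restricting to a bijection between leaves and $V$ (we identify vertices with leaves), and $\mathcal{M}_2$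 mapping each tree edge $(a,b)$ to a path in $G$ between $\mathcal{M}_1(a),\mathcal{M}_1(b)$; capacities $y(f)=\tilde x(\delta_G(A'))$ with $A'$ the vertex set of leaves in one component of $\mathcal{T}-f$; $\mathcal{M}^{-1}(F)=\{f:\mathcal{M}_2(f)\cap F\ne\emptyset\}$; good for $F$ means $y(\mathcal{M}^{-1}(F))\le\frac12$. $\delta_{\mathcal{T}\setminus\mathcal{M}^{-1}(F)}(S)$ denotes tree edges not in $\mathcal{M}^{-1}(F)$ with exactly one endpoint in $S$. $\mathcal{Q}_F$ is the set of components of $(V,H\setminus F)$; $Q_{s_i},Q_{t_i}$ contain $s_i,t_i$; $Q\in\mathcal{Q}_F$ is shattered if its leaves are not all in one component of $\mathcal{T}-\mathcal{M}^{-1}(F)$; disjoint $A,B$ partition the shattered components if each shattered component lies in $A$ or in $B$; $Z_F=\{(A\cup Q_{s_i},B\cup Q_{t_i}):(A,B)\text{ partitions the shattered components},i\in[k]\}$. *)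

(* Defs.v *)
From HB Require Import structures.
From mathcomp Require Import all_boot all_order all_algebra.
Set Implicit Arguments.
Unset Strict Implicit.
Unset Printing Implicit Defensive.
Import Order.TTheory GRing.Theory Num.Theory.

(* Graphs are finite multigraphs: a vertex finType V, an edge finType E and an
   endpoint map ends : E -> V * V (edges undirected; orientation irrelevant). *)

Definition joins (V : eqType) (E : Type) (ends : E -> V * V) (e : E) (u w : V) : bool :=
  (((ends e).1 == u) && ((ends e).2 == w)) || (((ends e).1 == w) && ((ends e).2 == u)).

Definition cut (V E : finType) (ends : E -> V * V) (X : {set E}) (S : {set V}) : {set E} :=
  [set e in X | ((ends e).1 \in S) != ((ends e).2 \in S)].

Definition conn (V E : finType) (ends : E -> V * V) (X : {set E}) : rel V :=
  connect (fun u w => [exists e in X, joins ends e u w]).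

Definition has_cycle (N TE : finType) (tend : TE -> N * N) : Prop :=
  exists (es : seq TE) (vs : seq N),
    [/\ size es = size vs, (0 < size es)%N, uniq es, uniq vs &
        forall (e0 : TE) (v0 : N) (j : nat), (j < size es)%N ->
          joins tend (nth e0 es j) (nth v0 vs j) (nth v0 vs (j.+1 %% size vs))].

Definition is_tree (N TE : finType) (tend : TE -> N * N) : Prop :=
  (forall a b : N, conn tend [set: TE] a b) /\ ~ has_cycle tend.

Definition is_leaf (N TE : finType) (tend : TE -> N * N) (a : N) : bool :=
  #|[set f : TE | ((tend f).1 == a) || ((tend f).2 == a)]| == 1%N.

Definition is_path (V E : finType) (ends : E -> V * V) (u w : V) (es : seq E) : Prop :=
  exists vs : seq V,
    [/\ size vs = size es, last u vs = w, uniq (u :: vs) &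
        forall (e0 : E) (j : nat), (j < size es)%N ->
          joins ends (nth e0 es j) (nth u (u :: vs) j) (nth u vs j)].

Definition tree_embedding (V E : finType) (ends : E -> V * V)
  (N TE : finType) (tend : TE -> N * N) (M1 : N -> V) (M2 : TE -> seq E) : Prop :=
  [/\ is_tree tend,
      (forall a b, is_leaf tend a -> is_leaf tend b -> M1 a = M1 b -> a = b),
      (forall v, exists2 a, is_leaf tend a & M1 a = v) &
      (forall f, is_path ends (M1 (tend f).1) (M1 (tend f).2) (M2 f))].

Definition xtilde (R : numFieldType) (E : finType) (p q : nat) (beta : R)
  (H : {set E}) (x : E -> R) (e : E) : R :=
  if e \in H then ((4 * (p + q)%:R * beta)^-1)%R else x e.

(* y(f) = tilde x (delta_G(A')), A' = vertices of the leaves in the component of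
   T - f containing the first endpoint of f *)
Definition tree_cap (R : numFieldType) (V E : finType) (ends : E -> V * V)
  (p q : nat) (beta : R) (H : {set E}) (x : E -> R)
  (N TE : finType) (tend : TE -> N * N) (M1 : N -> V) (f : TE) : R :=
  (\sum_(e in cut ends [set: E]
           [set v | [exists a, [&& is_leaf tend a, M1 a == v &
                                   conn tend ([set: TE] :\ f) (tend f).1 a]]])
     xtilde p q beta H x e)%R.

Definition Minv (E TE : finType) (M2 : TE -> seq E) (F : {set E}) : {set TE} :=
  [set f | has (fun e => e \in F) (M2 f)].

Definition separates (V : finType) (S : {set V}) (u w : V) : bool :=
  (u \in S) != (w \in S).

Definition flex_connected (V E : finType) (ends : E -> V * V) (safe : {set E})
  (p q k : nat) (s t : 'I_k -> V) (H : {set E}) : Prop :=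
  forall (i : 'I_k) (S : {set V}), separates S (s i) (t i) ->
    (p <= #|cut ends H S :&: safe|)%N || (p + q <= #|cut ends H S|)%N.

Definition violated (V E : finType) (ends : E -> V * V) (safe : {set E})
  (p q k : nat) (s t : 'I_k -> V) (H : {set E}) (S : {set V}) : bool :=
  [&& [exists i, separates S (s i) (t i)],
      #|cut ends H S| == (p + q)%N & (#|cut ends H S :&: safe| < p)%N].

Definition violating (V E : finType) (ends : E -> V * V) (safe : {set E})
  (p q k : nat) (s t : 'I_k -> V) (H : {set E}) (F : {set E}) : Prop :=
  exists S : {set V}, violated ends safe p q s t H S /\ F = cut ends H S.

Definition compF (V E : finType) (ends : E -> V * V) (H F : {set E}) (v : V) : {set V} :=
  [set w | conn ends (H :\: F) v w].

Definition shattered (V E : finType) (N TE : finType) (tend : TE -> N * N)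
  (M1 : N -> V) (M2 : TE -> seq E) (F : {set E}) (Q : {set V}) : Prop :=
  exists a b, [/\ is_leaf tend a, is_leaf tend b, M1 a \in Q, M1 b \in Q &
                  ~~ conn tend (~: Minv M2 F) a b].

Definition partitions_shattered (V E : finType) (ends : E -> V * V) (H F : {set E})
  (N TE : finType) (tend : TE -> N * N) (M1 : N -> V) (M2 : TE -> seq E)
  (A B : {set V}) : Prop :=
  [disjoint A & B] /\
  forall v, shattered tend M1 M2 F (compF ends H F v) ->
    compF ends H F v \subset A \/ compF ends H F v \subset B.

Definition in_ZF (V E : finType) (ends : E -> V * V) (k : nat) (s t : 'I_k -> V)
  (H F : {set E}) (N TE : finType) (tend : TE -> N * N) (M1 : N -> V)
  (M2 : TE -> seq E) (X Y : {set V}) : Prop :=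
  exists (A B : {set V}) (i : 'I_k),
    [/\ partitions_shattered ends H F tend M1 M2 A B,
        X = A :|: compF ends H F (s i) & Y = B :|: compF ends H F (t i)].

(* Main.v *)
Require Import Defs.
From HB Require Import structures.
From mathcomp Require Import all_boot all_order all_algebra.
From mathcomp Require Import lra.
Import Order.TTheory GRing.Theory Num.Theory.
Set Implicit Arguments. Unset Strict Implicit. Unset Printing Implicit Defensive.
Definition rr (N TE : finType) (tend : TE -> N * N) (X : {set TE}) : rel N :=
  fun u w => [exists e in X, joins tend e u w].

Lemma joins_end (N TE : finType) (tend : TE -> N * N) e u w :
  joins tend e u w ->
  [/\ (tend e).1 \in [:: u; w], (tend e).2 \in [:: u; w],
      u \in [:: (tend e).1; (tend e).2] & w \in [:: (tend e).1; (tend e).2]].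
Proof.
rewrite /joins !inE; case/orP => /andP[/eqP-> /eqP->]; by rewrite !eqxx ?orbT.
Qed.

Lemma rr_sym (N TE : finType) (tend : TE -> N * N) X : symmetric (rr tend X).
Proof.
move=> u w; rewrite /rr; apply/existsP/existsP => -[e /andP[He J]]; exists e;
  by rewrite He /= /joins orbC.
Qed.

Lemma pm_props (N TE : finType) (tend : TE -> N * N) (X : {set TE}) (g : TE) c p :
  path (rr tend X) c p -> uniq (c :: p) ->
  uniq (pairmap (fun u w => odflt g [pick e in X | joins tend e u w]) c p) /\
  (forall h, h \in pairmap (fun u w => odflt g [pick e in X | joins tend e u w]) c p ->
     [/\ h \in X, (tend h).1 \in c :: p & (tend h).2 \in c :: p]).
Proof.
set pe := fun u w => _.
have peP u w : rr tend X u w -> pe u w \in X /\ joins tend (pe u w) u w.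
  rewrite /rr /pe => /existsP[e0 He0]; case: pickP => [e /andP[]|/(_ e0)] //=.
  by rewrite He0.
elim: p c => [|w p IH] c //= /andP[Hcw Hp] /andP[Hc Hu].
have [IH1 IH2] := IH w Hp Hu.
have [PX PJ] := peP _ _ Hcw.
have [E1 E2 E3 E4] := joins_end PJ.
split.
  rewrite IH1 andbT; apply/negP => /IH2 [_ H1 H2].
  move: E3; rewrite !inE => /orP[/eqP Ec|/eqP Ec]; move: Hc; rewrite Ec ?H1 ?H2 //.
move=> h; rewrite inE => /orP[/eqP->|/IH2[A1 A2 A3]].
  split => //.
    by move: E1; rewrite !inE => /orP[]->; rewrite ?orbT.
  by move: E2; rewrite !inE => /orP[]->; rewrite ?orbT.
by split => //; rewrite inE ?A2 ?A3 orbT.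
Qed.

Lemma tree_noconn (N TE : finType) (tend : TE -> N * N) g :
  is_tree tend -> ~~ conn tend (setT :\ g) (tend g).1 (tend g).2.
Proof.
move=> [_ Hac]; apply/negP => /connectP [pth Hp Hl].
case: (shortenP Hp) Hl => p' Hp' Hu _ Hl.
apply: Hac.
set c := (tend g).1 in Hp' Hu Hl *.
have [U1 U2] := pm_props g Hp' Hu.
set pe := fun u w => _ in U1 U2.
exists (pairmap pe c p' ++ [:: g]), (c :: p'); split.
- by rewrite size_cat size_pairmap /= addn1.
- by rewrite size_cat addn1.
- rewrite cat_uniq U1 /= andbT orbF; apply/negP => /U2[]; by rewrite !inE eqxx.
- exact: Hu.
- move=> e0 v0 j; rewrite size_cat size_pairmap /= addn1 ltnS leq_eqVlt.
  case/orP => [/eqP->|Hj].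
    rewrite nth_cat size_pairmap ltnn subnn /= modnn.
    have -> : nth v0 (c :: p') (size p') = (tend g).2.
      by rewrite Hl -[size p']/((size (c :: p')).-1) nth_last.
    by rewrite /joins /c !eqxx orbT.
  rewrite nth_cat size_pairmap Hj (nth_pairmap c) // modn_small; last by rewrite /= ltnS.
  move/(pathP c): (Hp') => /(_ j Hj).
  have -> : nth v0 (c :: p') j = nth c (c :: p') j.
    by apply: set_nth_default; rewrite /= ltnW.
  have -> : nth v0 (c :: p') j.+1 = nth c p' j by apply: set_nth_default.
  rewrite /rr => /existsP[e1 He1]; rewrite /pe; case: pickP => [e /andP[] //|/(_ e1)].
  by rewrite He1.
Qed.

Lemma split_cross (N : finType) (S : {set N}) a (p : seq N) :
  a \in S -> last a p \notin S ->
  exists p1 z' p2, [/\ p = p1 ++ z' :: p2, last a p1 \in S & z' \notin S].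
Proof.
elim: p a => [|w p IH] a /=; first by move=> ->.
move=> Ha Hl; case Hw: (w \in S).
  have [p1 [z' [p2 [E1 E2 E3]]]] := IH w Hw Hl.
  by exists (w :: p1), z', p2; rewrite E1.
by exists [::], w, p; rewrite Hw.
Qed.

Lemma cross (N TE : finType) (tend : TE -> N * N) (Xt : {set TE}) (S : {set N}) a b :
  is_tree tend -> a \in S -> b \notin S -> conn tend Xt a b ->
  exists2 g, g \in cut tend Xt S &
    conn tend (setT :\ g) (tend g).1 a != conn tend (setT :\ g) (tend g).1 b.
Proof.
move=> Ht Ha Hb /connectP [pth Hp Hl].
case: (shortenP Hp) Hl => p' Hp' Hu _ Hl.
rewrite Hl in Hb.
have [p1 [z' [p2 [E1 E2 E3]]]] := split_cross Ha Hb.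
set z := last a p1 in E2.
move: Hp' Hu Hl; rewrite E1 cat_path last_cat /= -/z => /and3P[P1 Pzz P2] Hu Hl.
have [g Hg] := existsP Pzz; move/andP: Hg => [HgX Jg].
have [G1 G2 G3 G4] := joins_end Jg.
have : uniq ((a :: p1) ++ z' :: p2) by [].
rewrite cat_uniq => /and3P[_ Hdis _].
have z'N : z' \notin a :: p1.
  by apply/negP => H; move/hasP: Hdis; apply; exists z'; rewrite ?inE ?eqxx.
have zN : z \notin z' :: p2.
  apply/negP => H; move/hasP: Hdis; apply; exists z => //; exact: mem_last.
exists g.
  rewrite inE HgX /=.
  have Hne : z != z' by apply/eqP => Ezz; move: E2 E3; rewrite -/z Ezz => ->.
  move: G3 G4 Hne; rewrite !inE => /orP[]/eqP <- /orP[]/eqP <-; rewrite ?eqxx //= => _.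
  - by rewrite E2 (negbTE E3).
  - by rewrite E2 (negbTE E3).
have sub_ok (P : seq N) y u w0 : y \in [:: (tend g).1; (tend g).2] -> y \notin P ->
   u \in P -> w0 \in P ->
   (fun u w => [exists e in Xt, joins tend e u w]) u w0 ->
   (fun u w => [exists e in [set: TE] :\ g, joins tend e u w]) u w0.
  move=> Hy NP HuP HwP /existsP[e /andP[He Je]]; apply/existsP; exists e.
  rewrite Je andbT !inE andbT; apply/eqP => Eeg; subst e.
  have [F1 F2 _ _] := joins_end Je.
  move: Hy NP F1 F2; rewrite !inE => /orP[]/eqP -> NP /orP[]/eqP F /orP[]/eqP F';
    by move: NP; rewrite ?F ?F' ?HuP ?HwP.
have Cpre : conn tend (setT :\ g) a z.
  apply/connectP; exists p1 => //.
  refine (@sub_in_path _ (mem (a :: p1)) _ _ _ _ _ _ P1); last by apply/allP => y.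
  move=> u w0 HuP HwP; exact: (sub_ok _ z' _ _ G4 z'N).
have Csuf : conn tend (setT :\ g) z' b.
  apply/connectP; exists p2 => //.
  refine (@sub_in_path _ (mem (z' :: p2)) _ _ _ _ _ _ P2); last by apply/allP => y.
  move=> u w0 HuP HwP; exact: (sub_ok _ z _ _ G3 zN).
have Hsym : forall u w, conn tend (setT :\ g) u w = conn tend (setT :\ g) w u := sym_connect_sym (rr_sym tend ([set: TE] :\ g)).
have Hnc := tree_noconn g Ht.
move: G3; rewrite !inE => /orP[]/eqP Ez.
- have Ez' : z' = (tend g).2.
    move: G4; rewrite !inE => /orP[]/eqP // Ez'.
    by move: E2 E3; rewrite -/z Ez -Ez' => ->.
  rewrite -Ez (Hsym z a) Cpre; case Hc: (conn _ _ z b) => //.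
  have Csuf' : conn tend (setT :\ g) b z' by rewrite Hsym.
  by move: Hnc; rewrite -Ez -Ez' => /negP; case; exact: (connect_trans Hc Csuf').
- have Ez' : z' = (tend g).1.
    move: G4; rewrite !inE => /orP[]/eqP // Ez'.
    by move: E2 E3; rewrite -/z Ez -Ez' => ->.
  rewrite -Ez' Csuf; case Hc: (conn _ _ z' a) => //.
  have Cpre' : conn tend (setT :\ g) a z := Cpre.
  by move: Hnc; rewrite -Ez -Ez' => /negP; case; exact: (connect_trans Hc Cpre').
Qed.

Local Open Scope ring_scope.

Lemma sum_ge_term (R : realFieldType) (I : finType) (A : {set I}) (G : I -> R) i :
  i \in A -> (forall j, j \in A -> 0 <= G j) -> G i <= \sum_(j in A) G j.
Proof.
move=> Hi H0; rewrite (bigD1 i) //= lerDl sumr_ge0 // => j /andP[Hj _]; exact: H0.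
Qed.

Lemma sum_sub (R : realFieldType) (I : finType) (A B : {set I}) (G : I -> R) :
  A \subset B -> (forall j, j \in B -> 0 <= G j) ->
  \sum_(j in A) G j <= \sum_(j in B) G j.
Proof.
move=> sAB H0; rewrite [X in _ <= X](big_setID A) /=.
have -> : B :&: A = A by apply/setIidPr.
rewrite lerDl sumr_ge0 // => j; rewrite inE => /andP[_ Hj]; exact: H0.
Qed.

Lemma sum_cover (R : realFieldType) (I J : finType) (W : {set I}) (D : {set J})
  (C : J -> {set I}) (G : I -> R) :
  (forall i, 0 <= G i) ->
  (forall i, i \in W -> exists2 j, j \in D & i \in C j) ->
  \sum_(i in W) G i <= \sum_(j in D) \sum_(i in C j) G i.
Proof.
move=> H0 Hcov.
apply: (@le_trans _ _ (\sum_(i in W) \sum_(j in D) (if i \in C j then G i else 0))).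
  apply: ler_sum => i /Hcov [j Hj Hij].
  apply: (@le_trans _ _ (if i \in C j then G i else 0)); first by rewrite Hij.
  apply: (sum_ge_term (A := D) (G := fun j => if i \in C j then G i else 0)) => //.
  by move=> j' _; case: ifP.
rewrite exchange_big /=; apply: ler_sum => j _.
rewrite [X in _ <= X]big_mkcond /=.
apply: (@le_trans _ _ (\sum_(i in [set: I]) (if i \in C j then G i else 0))).
  apply: sum_sub; [exact: subsetT | by move=> i _; case: ifP].
by rewrite le_eqVlt; apply/orP; left; apply/eqP; apply: eq_bigl => i; rewrite inE.
Qed.

Theorem lemma4p4 (R : realFieldType) (V E : finType) (ends : E -> V * V)
  (safe : {set E}) (p q k : nat) (s t : 'I_k -> V) (H : {set E})
  (beta : R) (x : E -> R)
  (N TE : finType) (tend : TE -> N * N) (M1 : N -> V) (M2 : TE -> seq E)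
  (F : {set E}) (X Y : {set V}) (S : {set N}) :
  (1 <= p + q)%N ->
  flex_connected ends safe p q s t H ->
  1 <= beta ->
  (forall S0 : {set V}, violated ends safe p q s t H S0 ->
     1 <= \sum_(e in cut ends (~: H) S0) x e) ->
  (forall e, e \notin H -> 0 < x e /\ x e < (4 * (p + q)%:R * beta)^-1) ->
  violating ends safe p q s t H F ->
  tree_embedding ends tend M1 M2 ->
  \sum_(f in Minv M2 F) tree_cap ends p q beta H x tend M1 f <= 2^-1 ->
  in_ZF ends s t H F tend M1 M2 X Y ->
  (forall a, is_leaf tend a -> M1 a \in X -> a \in S) ->
  (forall a, is_leaf tend a -> M1 a \in Y -> a \notin S) ->
  (4 * (p + q)%:R * beta)^-1
    <= \sum_(f in cut tend (~: Minv M2 F) S) tree_cap ends p q beta H x tend M1 f.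
Proof.
move=> Hpq Hflex Hbeta Hviol Hx [S0 [HS0 EF]] Hemb Hgood
  [A [B [i [[Hdis Hpart] EX EY]]]] HX HY.
case: Hemb => Htree Hinj Hsurj _.
set kap := (4 * (p + q)%:R * beta)^-1.
have Hpq' : 1 <= (p + q)%:R :> R by rewrite ler1n.
have c_pos : 0 < 4 * (p + q)%:R * beta by nra.
have kap_pos : 0 < kap by rewrite invr_gt0.
have kap_half : kap <= 2^-1.
  rewrite /kap lef_pV2 ?posrE //; nra.
have xt_ge0 e : 0 <= xtilde p q beta H x e.
  rewrite /xtilde; case: ifP => He; first exact: ltW.
  by apply: ltW; case: (Hx e); rewrite ?He.
set y := tree_cap ends p q beta H x tend M1.
have y_ge0 f : 0 <= y f by apply: sumr_ge0 => e _.
pose U := [set v | [exists a, [&& is_leaf tend a, M1 a == v & a \in S]]].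
pose Ag f := [set v | [exists a, [&& is_leaf tend a, M1 a == v &
                                   conn tend ([set: TE] :\ f) (tend f).1 a]]].
have memU a : is_leaf tend a -> (M1 a \in U) = (a \in S).
  move=> La; rewrite inE; apply/existsP/idP => [[a' /and3P[La' /eqP E' Ha']]|Ha].
    by rewrite -(Hinj _ _ La' La E').
  by exists a; rewrite La eqxx Ha.
have memAg f a : is_leaf tend a ->
    (M1 a \in Ag f) = conn tend ([set: TE] :\ f) (tend f).1 a.
  move=> La; rewrite inE; apply/existsP/idP => [[a' /and3P[La' /eqP E' Ha']]|Ha].
    by rewrite -(Hinj _ _ La' La E').
  by exists a; rewrite La eqxx Ha.
have Hsym (Xt : {set TE}) u w : conn tend Xt u w = conn tend Xt w u.
  exact: (sym_connect_sym (rr_sym tend Xt)).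
have cover2 (Xt : {set TE}) e a1 a2 : is_leaf tend a1 -> is_leaf tend a2 ->
    M1 a1 = (ends e).1 -> M1 a2 = (ends e).2 -> (a1 \in S) != (a2 \in S) ->
    conn tend Xt a1 a2 ->
    exists2 f, f \in cut tend Xt S & e \in cut ends [set: E] (Ag f).
  move=> L1 L2 E1 E2 Hs Hc.
  case H1: (a1 \in S) in Hs.
    have H2 : a2 \notin S by move: Hs; case: (a2 \in S).
    have [f Hf Hne] := cross Htree H1 H2 Hc.
    by exists f => //; rewrite inE -E1 -E2 !memAg // in_setT.
  have H2 : a2 \in S by move: Hs; case: (a2 \in S).
  have [f Hf Hne] := cross Htree H2 (negbT H1) (etrans (Hsym _ _ _) Hc).
  by exists f => //; rewrite inE -E1 -E2 !memAg // in_setT eq_sym.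
have endsU (Z : {set E}) e : e \in cut ends Z U ->
    exists a1, exists a2, [/\ is_leaf tend a1, is_leaf tend a2, M1 a1 = (ends e).1,
       M1 a2 = (ends e).2 & (a1 \in S) != (a2 \in S)].
  rewrite inE => /andP[_ He].
  have [a1 L1 E1] := Hsurj (ends e).1; have [a2 L2 E2] := Hsurj (ends e).2.
  exists a1, a2; split => //; by rewrite -!memU // E1 E2.
case: (boolP [exists e in cut ends H U, e \notin F]).
  case/existsP => e /andP[HeU HeF].
  have HeH : e \in H by move: HeU; rewrite inE => /andP[].
  have [a1 [a2 [L1 L2 E1 E2 Hs]]] := endsU _ _ HeU.
  pose Q := compF ends H F (ends e).1.
  have Q1 : (ends e).1 \in Q by rewrite inE; exact: connect0.
  have Q2 : (ends e).2 \in Q.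
    rewrite inE; apply: connect1; apply/existsP; exists e.
    by rewrite !inE HeF HeH /joins !eqxx.
  have Hc : conn tend (~: Minv M2 F) a1 a2.
    case: (boolP (conn tend (~: Minv M2 F) a1 a2)) => // Hn.
    have Hsh : shattered tend M1 M2 F Q.
      by exists a1, a2; split => //; rewrite ?E1 ?E2.
    exfalso; case: (Hpart _ Hsh) => Hsub.
    - have I1 : a1 \in S by apply: HX => //; rewrite EX inE (subsetP Hsub) // E1.
      have I2 : a2 \in S by apply: HX => //; rewrite EX inE (subsetP Hsub) // E2.
      by move: Hs; rewrite I1 I2.
    - have I1 : a1 \notin S by apply: HY => //; rewrite EY inE (subsetP Hsub) // E1.
      have I2 : a2 \notin S by apply: HY => //; rewrite EY inE (subsetP Hsub) // E2.
      by move: Hs; rewrite (negbTE I1) (negbTE I2).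
  have [f Hf HeA] := cover2 _ _ _ _ L1 L2 E1 E2 Hs Hc.
  apply: (@le_trans _ _ (y f)); last by apply: sum_ge_term => // j _.
  have -> : kap = xtilde p q beta H x e by rewrite /xtilde HeH.
  exact: (sum_ge_term (A := cut ends [set: E] (Ag f))).
move/existsPn => Hall.
have HsubF : cut ends H U \subset F.
  apply/subsetP => e He; move: (Hall e); rewrite He /=; exact: negbNE.
have sU : s i \in U.
  have [a La Ea] := Hsurj (s i); rewrite -Ea memU //; apply: HX => //.
  by rewrite EX Ea !inE; apply/orP; right; exact: connect0.
have tU : t i \notin U.
  have [a La Ea] := Hsurj (t i); rewrite -Ea memU //; apply: HY => //.
  by rewrite EY Ea !inE; apply/orP; right; exact: connect0.
have sepU : separates U (s i) (t i) by rewrite /separates sU (negbTE tU).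
have HvU : violated ends safe p q s t H U.
  move: HS0; rewrite /violated => /and3P[_ /eqP C1 C2].
  have L1 : (#|cut ends H U| <= #|F|)%N by exact: subset_leq_card.
  have L2 : (#|cut ends H U :&: safe| <= #|F :&: safe|)%N.
    by apply: subset_leq_card; apply: setSI.
  have Hfl := Hflex i U sepU.
  rewrite -EF in C1 C2.
  rewrite /violated; apply/and3P; split; first by apply/existsP; exists i.
  - move: Hfl; case/orP => Hc; rewrite eqn_leq; apply/andP; split.
    + by rewrite -C1.
    + by move: (leq_trans Hc L2); rewrite leqNgt C2.
    + by rewrite -C1.
    + exact: Hc.
  - exact: leq_ltn_trans L2 C2.
have H1 := Hviol U HvU.
have Hstep1 : \sum_(e in cut ends (~: H) U) x e
            <= \sum_(e in cut ends [set: E] U) xtilde p q beta H x e.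
  rewrite (eq_bigr (xtilde p q beta H x)); last first.
    move=> e; rewrite !inE => /andP[He _]; by rewrite /xtilde (negbTE He).
  apply: sum_sub => // ; apply/subsetP => e; rewrite !inE => /andP[_ ->].
  by [].
have Hstep2 : \sum_(e in cut ends [set: E] U) xtilde p q beta H x e
            <= \sum_(f in cut tend [set: TE] S) y f.
  apply: (sum_cover (C := fun f => cut ends [set: E] (Ag f))) => // e He.
  have [a1 [a2 [L1 L2 E1 E2 Hs]]] := endsU _ _ He.
  exact: (cover2 _ _ _ _ L1 L2 E1 E2 Hs (proj1 Htree a1 a2)).
have Hstep3 : \sum_(f in cut tend [set: TE] S) y f
      <= \sum_(f in cut tend (~: Minv M2 F) S) y f + \sum_(f in Minv M2 F) y f.
  rewrite (big_setID (Minv M2 F)) /= addrC lerD //.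
    rewrite le_eqVlt; apply/orP; left; apply/eqP; apply: eq_bigl => f.
    by rewrite !inE.
  apply: sum_sub => //; exact: subsetIr.
have : 1 <= \sum_(f in cut tend (~: Minv M2 F) S) y f + 2^-1.
  apply: (le_trans H1); apply: (le_trans Hstep1); apply: (le_trans Hstep2).
  apply: (le_trans Hstep3); by rewrite lerD2l.
move=> Hfin.
apply: (le_trans kap_half).
lra.
Qed.
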